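(* Let $G$ be a tree with $n\ge k\ge1$ vertices and let $P^*$ be a longest path of $G$. Then $h^r_k(G)\ge (n-k)+\sum_{e\in E} d^k_{P^*}(e)$.
   Context: All graphs are finite, simple, undirected. A configuration of $k$ agents is a $k$-tuple of pairwise distinct vertices of $G$ whose induced subgraph is connected (identified with its vertex set when convenient). Configurations $(v_1,\dots,v_k)$, $(v'_1,\dots,v'_k)$ are adjacent if for every $i$ either $v_i=v'_i$ or $(v_i,v'_i)\in E$. A restricted transition walk is a sequence of configurations $\mathcal C_0,\dots,\mathcal C_l$ such that consecutive configurations are adjacent and $\mathcal C_{t+1}$ contains exactly one vertex not in $\mathcal C_t$; it is spanning if every vertex lies in some $\mathcal C_t$. $h^r_k(G)$ is the minimum length of a spanning restricted transition walk. For a tree $G$, a path $P$ and $k\ge1$, define $d^k_P(e)\in\{0,1\}$ for every edge $e$: $d^k_P(e)=0$ if $e$ lies on $P$; otherwise write $e=(u,v)$ with $u$ closer to $P$ than $v$, let $T_P(e)$ be the component of $G-e$ containing $v$, rooted at $v$, and set $d^k_P(e)=1$ if $T_P(e)$ has height at least $k-1$ (equivalently, some vertex of $T_P(e)$ has distance at least $k$ from $u$), and $d^k_P(e)=0$ otherwise. *)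

(* Defs.v *)
From mathcomp Require Import all_boot all_order.
Set Implicit Arguments. Unset Strict Implicit. Unset Printing Implicit Defensive.

Section Graphs.
Variable T : finType.
Variable g : rel T.

Definition edges : {set {set T}} :=
  [set A : {set T} | [exists x, exists y, (A == [set x; y]) && g x y]].

Definition simple_graph := symmetric g /\ irreflexive g.

Definition is_tree :=
  simple_graph /\ (forall x y, connect g x y) /\ #|edges| = #|T| - 1.

Definition induced (S : {set T}) : rel T :=
  [rel a b | [&& g a b, a \in S & b \in S]].

Definition del_edge (A : {set T}) : rel T :=
  [rel a b | g a b && ([set a; b] != A)].

Fixpoint nbhd (n : nat) (S : {set T}) : {set T} :=
  match n with
  | 0 => S
  | n'.+1 => nbhd n' S :|: [set y | [exists z in nbhd n' S, g z y]]
  end.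

Definition is_path (P : seq T) : bool :=
  if P is x :: s then uniq P && path g x s else false.

Definition longest_path (P : seq T) :=
  is_path P /\ forall Q, is_path Q -> size Q <= size P.

Definition edge_on_path (P : seq T) (A : {set T}) : bool :=
  has (fun p : T * T => A == [set p.1; p.2]) (zip P (behead P)).

(* d^k_P(A) for an edge A, as 0/1:
   A = {u,v}, A not on P, u strictly closer to P than v (some radius n
   around P contains u but not v), and some vertex w of the component of
   G - A containing v has distance >= k from u. *)
Definition dk (k : nat) (P : seq T) (A : {set T}) : nat :=
  [exists u, exists v,
     [&& A == [set u; v], g u v, ~~ edge_on_path P A,
         [exists n : 'I_#|T|.+1, (u \in nbhd n [set x in P]) && (v \notin nbhd n [set x in P])]
       & [exists w, connect (del_edge A) v w && (w \notin nbhd k.-1 [set u])]]].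

(* configurations of k agents: injective k-tuples inducing a connected subgraph *)
Definition conf_set (k : nat) (C : {ffun 'I_k -> T}) : {set T} := [set C i | i in 'I_k].

Definition is_conf (k : nat) (C : {ffun 'I_k -> T}) : bool :=
  injectiveb C &&
  [forall x in conf_set C, forall y in conf_set C, connect (induced (conf_set C)) x y].

Definition conf_adj (k : nat) (C D : {ffun 'I_k -> T}) : bool :=
  [forall i, (C i == D i) || g (C i) (D i)].

Definition rstep (k : nat) (C D : {ffun 'I_k -> T}) : bool :=
  conf_adj C D && (#|conf_set D :\: conf_set C| == 1).

(* a restricted transition walk C_0 = c0, C_1..C_l = cs, of length l = size cs *)
Definition restricted_walk (k : nat) (c0 : {ffun 'I_k -> T}) (cs : seq {ffun 'I_k -> T}) : bool :=
  all (@is_conf k) (c0 :: cs) && path (@rstep k) c0 cs.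

Definition spanning (k : nat) (c0 : {ffun 'I_k -> T}) (cs : seq {ffun 'I_k -> T}) : bool :=
  [forall x, has (fun C => x \in conf_set C) (c0 :: cs)].
End Graphs.

(* Main.v *)
Require Import Defs.
From mathcomp Require Import all_boot all_order zify.
Set Implicit Arguments. Unset Strict Implicit. Unset Printing Implicit Defensive.

Section Gen.
Variable T : finType.
Variable h : rel T.
Implicit Types S : {set T}.

Lemma nbhd_sub n S : nbhd h n S \subset nbhd h n.+1 S.
Proof. by rewrite /= subsetUl. Qed.

Lemma nbhd_mono m n S : m <= n -> nbhd h m S \subset nbhd h n S.
Proof.
move=> le; elim: n le => [|n IH]; first by rewrite leqn0 => /eqP ->.
rewrite leq_eqVlt => /orP [/eqP -> //| lt].
exact: subset_trans (IH lt) (nbhd_sub _ _).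
Qed.

Lemma nbhdP n S y : y \in nbhd h n S ->
  exists x, x \in S /\ exists s, [/\ path h x s, last x s = y & size s <= n].
Proof.
elim: n y => [|n IH] y /=; first by move=> yS; exists y; split=> //; exists [::].
case/setUP => [/IH [x [xS [s [p l sz]]]]|].
  by exists x; split=> //; exists s; split=> //; apply: leqW.
rewrite inE => /existsP [z /andP [/IH [x [xS [s [p l sz]]]] hz]].
exists x; split=> //; exists (rcons s y); split.
- by rewrite rcons_path p l.
- by rewrite last_rcons.
- by rewrite size_rcons.
Qed.

Lemma nbhdW n S x s : x \in S -> path h x s -> size s <= n -> last x s \in nbhd h n S.
Proof.
move=> xS; elim/last_ind: s n => [|s z IH] n.
  by move=> _ _; apply: (subsetP (nbhd_mono S (leq0n n))).
rewrite rcons_path size_rcons last_rcons => /andP [p hz].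
case: n => // n; rewrite ltnS => sz /=.
apply/setUP; right; rewrite inE; apply/existsP; exists (last x s).
by rewrite IH.
Qed.

Definition dist x y := find (fun n => y \in nbhd h n [set x]) (iota 0 #|T|).

Lemma dist_le x y n : y \in nbhd h n [set x] -> dist x y <= n.
Proof.
move=> yn; rewrite leqNgt; apply/negP => lt.
have := before_find 0 (s := iota 0 #|T|) (a := fun n => y \in nbhd h n [set x]) lt.
have nT : n < #|T|.
  by apply: leq_trans lt _; have := find_size (fun n => y \in nbhd h n [set x]) (iota 0 #|T|); rewrite size_iota.
by rewrite nth_iota // add0n yn.
Qed.

Lemma dist_walk x s : path h x s -> dist x (last x s) <= size s.
Proof. by move=> p; apply: dist_le; apply: nbhdW => //; rewrite inE. Qed.

Lemma dist_geo x y : connect h x y ->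
  exists s, [/\ path h x s, last x s = y & size s = dist x y].
Proof.
case/connectP => p p0 ->; case: (shortenP p0) => p' p1 u1 _.
have hasn : has (fun n => last x p' \in nbhd h n [set x]) (iota 0 #|T|).
  apply/hasP; exists (size p'); last by apply: nbhdW => //; rewrite inE.
  rewrite mem_iota add0n /=; move/card_uniqP: u1 => /= <-.
  by rewrite max_card.
have := nth_find 0 hasn; rewrite -/(dist x (last x p')).
have dT : dist x (last x p') < #|T|.
  by have := hasn; rewrite has_find size_iota.
rewrite nth_iota // add0n => /nbhdP [z [/set1P -> [s [ps ls sz]]]].
exists s; split=> //; apply/eqP; rewrite eqn_leq sz /= -{1}ls.
by rewrite dist_walk.
Qed.

Lemma dist_nbhd x y n : connect h x y -> (y \in nbhd h n [set x]) = (dist x y <= n).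
Proof.
move=> c; apply/idP/idP; first exact: dist_le.
move=> le; case: (dist_geo c) => s [p l sz]; rewrite -l; apply: nbhdW => //.
  by rewrite inE.
by rewrite sz.
Qed.

Lemma dist_xx x : dist x x = 0.
Proof. by apply/eqP; rewrite -leqn0 dist_le //= inE. Qed.

Lemma dist1 x y : h x y -> dist x y <= 1.
Proof. by move=> hxy; have := dist_walk (x := x) (s := [:: y]); rewrite /= hxy; apply. Qed.

Lemma dist_tri x y z : connect h x y -> connect h y z -> dist x z <= dist x y + dist y z.
Proof.
move=> c1 c2; case: (dist_geo c1) => s [p l <-]; case: (dist_geo c2) => t [q m <-].
rewrite -size_cat -m -l -last_cat; apply: dist_walk.
by rewrite cat_path p l q.
Qed.

Lemma dist0 x y : connect h x y -> dist x y = 0 -> x = y.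
Proof.
move=> c d0; case: (dist_geo c) => s [_ l]; rewrite d0; by case: s l => //= <-.
Qed.

End Gen.

Section Sym.
Variable T : finType.
Variable h : rel T.
Implicit Types S : {set T}.
Hypothesis hsym : symmetric h.

Lemma dist_sym x y : connect h x y -> dist h x y = dist h y x.
Proof.
have key : forall x y, connect h x y -> dist h y x <= dist h x y.
  move=> a b c; case: (dist_geo c) => s [p l <-].
  have hl : last (last a s) (rev (belast a s)) = a.
    have := congr1 (fun t => last a (rev t)) (lastI a s).
    by rewrite rev_rcons /= rev_cons last_rcons => <-.
  have := dist_walk (h := h) (x := last a s) (s := rev (belast a s)).
  rewrite rev_path size_rev size_belast hl l; apply.
  rewrite (@eq_path _ _ h) //; move=> u v /=; by rewrite hsym.
move=> c; have c' : connect h y x by rewrite (sym_connect_sym hsym).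
by apply/eqP; rewrite eqn_leq (key _ _ c) (key _ _ c').
Qed.

End Sym.

Section EdgeCount.
Variable T : finType.
Variable h : rel T.
Hypothesis hconn : forall x y, connect h x y.

Lemma parent_ex x r : x != r -> exists z, h x z && (dist h z r < dist h x r).
Proof.
move=> xr; case: (dist_geo (hconn x r)) => [[|z s] [/= p l sz]].
  by rewrite -l eqxx in xr.
case/andP: p => hz p; exists z; rewrite hz /=.
have := dist_walk p; rewrite /= in l; rewrite l -sz /=.
by move=> le; apply: leq_ltn_trans le _.
Qed.

Lemma conn_edges : #|T| - 1 <= #|edges h|.
Proof.
case: (pickP (fun _ : T => true)) => [r _|none]; last first.
  by have -> : #|T| = 0 by apply: eq_card0 => x; have := none x.
pose par x := odflt x [pick z | h x z && (dist h z r < dist h x r)].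
have parP : forall x, x != r -> h x (par x) && (dist h (par x) r < dist h x r).
  move=> x xr; rewrite /par; case: pickP => [z -> //|none].
  by case: (parent_ex xr) => z; rewrite none.
pose f x := [set x; par x].
have inj : {in [set~ r] &, injective f}.
  move=> x y; rewrite !inE => xr yr fxy; apply/eqP/negP => /negP nxy.
  have : x \in f y by rewrite -fxy /f set21.
  rewrite /f; case/set2P => [exy|xp]; first by rewrite exy eqxx in nxy.
  have : y \in f x by rewrite fxy /f set21.
  rewrite /f; case/set2P => [eyx|yp]; first by rewrite eyx eqxx in nxy.
  have := parP _ xr; have := parP _ yr; rewrite -xp -yp.
  case/andP => _ l1 /andP [_ l2].
  by have := ltn_trans l1 l2; rewrite ltnn.
rewrite subn1 -(cardsC1 r) -(card_in_imset inj); apply: subset_leq_card.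
apply/subsetP => A /imsetP [x]; rewrite !inE => xr ->.
apply/existsP; exists x; apply/existsP; exists (par x).
by rewrite eqxx /=; case/andP: (parP _ xr).
Qed.

End EdgeCount.

Lemma cardUD_gen (U : finType) (A C : {set U}) : #|A :|: C| = #|A| + #|C :\: A|.
Proof.
have := cardsID A C; rewrite cardsU setIC => e.
lia.
Qed.

Lemma sum_bool_card (U : finType) (P : pred U) (b : U -> bool) :
  \sum_(i | P i) (b i : nat) = #|[set i | P i && b i]|.
Proof.
rewrite -sum1dep_card big_mkcondr /=; apply: eq_bigr => i _; by case: (b i).
Qed.

Section Count.
Variable T : finType.
Variable C : nat -> {set T}.
Variables l k : nat.
Hypothesis C0 : #|C 0| = k.
Hypothesis one : forall t, t < l -> #|C t.+1 :\: C t| = 1.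

Fixpoint V t := if t is t'.+1 then V t' :|: C t'.+1 else C 0.

Lemma VP t x : reflect (exists2 i, i <= t & x \in C i) (x \in V t).
Proof.
elim: t => [|t IH] /=.
  by apply: (iffP idP) => [xc|[i]]; [exists 0 | rewrite leqn0 => /eqP ->].
apply: (iffP setUP) => [[/IH [i it xi]|xc]|[i]].
- by exists i => //; apply: leqW.
- by exists t.+1.
- rewrite leq_eqVlt => /orP [/eqP -> xc|it xi]; first by right.
  by left; apply/IH; exists i.
Qed.

Lemma CV i t : i <= t -> C i \subset V t.
Proof. by move=> it; apply/subsetP => x xi; apply/VP; exists i. Qed.

Definition revis t : bool := C t.+1 \subset V t.

Fixpoint RS t := if t is t'.+1 then RS t' + revis t' else 0.

Lemma count_walk t : t <= l -> #|V t| + RS t <= k + t.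
Proof.
elim: t => [|t IH] lt /=; first by rewrite C0 addn0.
have IH' := IH (ltnW lt).
rewrite cardUD_gen; rewrite /revis.
case: (boolP (C t.+1 \subset V t)) => sub /=.
  move: sub; rewrite -setD_eq0 => /eqP ->; rewrite cards0; move: IH'; lia.
have : #|C t.+1 :\: V t| <= #|C t.+1 :\: C t|.
  by apply: subset_leq_card; apply: setDS; apply: CV.
rewrite one //; move: IH'; lia.
Qed.

Lemma RS_sum t : RS t = \sum_(i < t) (revis i : nat).
Proof. by elim: t => [|t IH]; rewrite ?big_ord0 // big_ord_recr /= IH. Qed.

End Count.

Section Tree.
Variable T : finType.
Variable g : rel T.
Hypothesis gsym : symmetric g.
Hypothesis girr : irreflexive g.
Hypothesis gconn : forall x y, connect g x y.
Hypothesis gE : #|edges g| = #|T| - 1.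

Definition side (a b : T) : {set T} := [set w | connect (del_edge g [set a; b]) b w].
Local Notation d := (dist g).

Lemma delE A x y : del_edge g A x y = g x y && ([set x; y] != A).
Proof. by []. Qed.

Lemma del_sym A : symmetric (del_edge g A).
Proof. by move=> x y; rewrite /del_edge /= gsym setUC. Qed.

Lemma side_b a b : b \in side a b.
Proof. by rewrite inE connect0. Qed.

Lemma side_closed a b w z : w \in side a b -> g w z -> [set w; z] != [set a; b] ->
  z \in side a b.
Proof.
rewrite !inE => c gwz ne; apply: connect_trans c _; apply: connect1.
by rewrite delE gwz ne.
Qed.

Lemma side_cross a b w z : w \in side a b -> z \notin side a b -> g w z ->
  w = b /\ z = a.
Proof.
move=> ws zs gwz.
have e : [set w; z] = [set a; b].
  by apply/eqP/negP => /negP ne; rewrite (side_closed ws gwz ne) in zs.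
have : z \in [set a; b] by rewrite -e set22.
case/set2P => [za|zb]; last by rewrite zb side_b in zs.
have : w \in [set a; b] by rewrite -e set21.
case/set2P => [wa|//]; by rewrite wa za girr in gwz.
Qed.

Lemma bridge a b : g a b -> a \notin side a b.
Proof.
move=> gab; apply/negP; rewrite inE => cba.
pose h := del_edge g [set a; b].
have hsym := del_sym [set a; b].
have hconn : forall x y, connect h x y.
  move=> x y; apply: (connect_sub _ (gconn x y)) => u v guv.
  case ne: ([set u; v] != [set a; b]); first by apply: connect1; rewrite /h delE guv ne.
  move/negbFE/eqP: ne => e.
  have : u \in [set a; b] by rewrite -e set21.
  have : v \in [set a; b] by rewrite -e set22.
  case/set2P => ->; case/set2P => -> //; rewrite ?girr // in guv.
  by rewrite (sym_connect_sym hsym).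
have := conn_edges hconn.
have sub : edges h \subset edges g :\ [set a; b].
  apply/subsetP => A; rewrite !inE => /existsP [x /existsP [y /andP [/eqP -> /andP [gxy ne]]]].
  rewrite ne /=; apply/existsP; exists x; apply/existsP; exists y; by rewrite eqxx.
have Ein : [set a; b] \in edges g.
  rewrite inE; apply/existsP; exists a; apply/existsP; exists b; by rewrite eqxx.
have c1 := subset_leq_card sub.
have c2 := cardsD1 [set a; b] (edges g); rewrite Ein gE in c2.
have c3 : 2 <= #|T|.
  have ab : a != b by apply/eqP => e; rewrite e girr in gab.
  by have := max_card [set a; b]; rewrite cards2 ab.
move=> c4; have c5 : #|T| - 1 = 1 + #|edges g :\ [set a; b]| by rewrite c2.
move: c1 c5 c3 c4; lia.
Qed.

Lemma sides_disj a b x : g a b -> x \in side a b -> x \notin side b a.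
Proof.
move=> gab xa; apply/negP => xb; have := bridge gab; rewrite inE => /negP; apply.
have e : [set b; a] = [set a; b] by rewrite setUC.
move: xa xb; rewrite !inE e => c1 c2.
apply: connect_trans c1 _; by rewrite (sym_connect_sym (del_sym _)).
Qed.

Lemma cross_walk a b s x : g a b -> x \notin side a b -> path g x s ->
  last x s \in side a b -> d x a + 1 + d b (last x s) <= size s.
Proof.
move=> gab; elim: s x => [|y s IH] x xS /=; first by move=> _ xs; rewrite xs in xS.
case/andP => gxy p ls; case yS: (y \in side a b).
  have gyx : g y x by rewrite gsym.
  have [yb xa] := side_cross yS xS gyx.
  rewrite xa dist_xx add0n add1n ltnS -yb; exact: dist_walk.
have := IH y (negbT yS) p ls.
have : d x a <= d x y + d y a by apply: dist_tri.
have : d x y <= 1 by apply: dist1.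
move=> h1 h2 h3; lia.
Qed.

Lemma sep a b x w : g a b -> x \notin side a b -> w \in side a b ->
  d x w = d x a + 1 + d b w.
Proof.
move=> gab xS wS; apply/eqP; rewrite eqn_leq; apply/andP; split.
  apply: leq_trans (dist_tri (gconn x a) (gconn a w)) _.
  rewrite -addnA leq_add2l; apply: leq_trans (dist_tri (gconn a b) (gconn b w)) _.
  by rewrite leq_add2r dist1.
case: (dist_geo (gconn x w)) => s [p l <-]; rewrite -l; apply: cross_walk => //.
by rewrite l.
Qed.

Lemma path_del x z y s : path g y s -> x \notin y :: s ->
  path (del_edge g [set x; z]) y s.
Proof.
elim: s y => [|y' s IH] y //= /andP [gyy p].
rewrite !inE negb_or => /andP [xy]; rewrite negb_or => /andP [xy' xs].
rewrite delE gyy IH //; last by rewrite inE negb_or xy' xs.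
rewrite andbT; apply/eqP => e.
have : x \in [set y; y'] by rewrite e set21.
by case/set2P => ex; [rewrite ex eqxx in xy | rewrite ex eqxx in xy'].
Qed.

Lemma upath_dist x s : uniq (x :: s) -> path g x s -> d x (last x s) = size s.
Proof.
elim: s x => [|y s IH] x; first by rewrite /= dist_xx.
rewrite cons_uniq => /andP [xn u] /= /andP [gxy p].
have ls : last y s \in side x y.
  rewrite inE; apply/connectP; exists s => //; exact: path_del.
rewrite (sep gxy (bridge gxy) ls) dist_xx IH //.
Qed.

Lemma dsym x y : d x y = d y x.
Proof. by apply: (dist_sym gsym); apply: gconn. Qed.

Lemma dtri x y z : d x z <= d x y + d y z.
Proof. exact: dist_tri (gconn x y) (gconn y z). Qed.

Lemma dnbhd x y n : (y \in nbhd g n [set x]) = (d x y <= n).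
Proof. exact: dist_nbhd (gconn x y). Qed.

Lemma path_nth_dist x s i j : path g x s -> i <= j -> j <= size s ->
  d (nth x (x :: s) i) (nth x (x :: s) j) <= j - i.
Proof.
move=> p ij; elim: j ij => [|j IH]; first by rewrite leqn0 => /eqP -> _; rewrite dist_xx.
rewrite leq_eqVlt => /orP [/eqP <- _|lt js]; first by rewrite dist_xx.
have := IH lt (ltnW js).
have : d (nth x (x :: s) j) (nth x (x :: s) j.+1) <= 1.
  apply: dist1; move/(pathP x): p => /(_ j js) /=.
  by [].
move=> h1 h2; have := dtri (nth x (x :: s) i) (nth x (x :: s) j) (nth x (x :: s) j.+1).
rewrite ltnS in lt; move: h1 h2 lt; lia.
Qed.

Lemma proj x s r : uniq (x :: s) -> path g x s ->
  exists j, [/\ j <= size s, d r x = d r (nth x (x :: s) j) + j &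
     d r (last x s) = d r (nth x (x :: s) j) + (size s - j)].
Proof.
elim: s x => [|y s IH] x; first by move=> _ _; exists 0; split; rewrite /= ?addn0.
rewrite cons_uniq => /andP [xn u] /= /andP [gxy p].
have ls : last y s \in side x y.
  rewrite inE; apply/connectP; exists s => //; exact: path_del.
case rS: (r \in side x y).
  have [j [js e1 e2]] := IH y u p.
  have js' : j < size (y :: s) by rewrite /= ltnS.
  exists j.+1; rewrite ltnS js; split=> //.
  + rewrite [d r x]dsym (sep gxy (bridge gxy) rS) dist_xx dsym e1 /=.
    by rewrite (set_nth_default y x js') add0n add1n addnS.
  + by rewrite /= (set_nth_default y x js') e2 subSS.
exists 0; rewrite addn0 subn0; split=> //.
rewrite (sep gxy (negbT rS) ls) (upath_dist u p) /=; lia.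
Qed.

Lemma far_end x s : uniq (x :: s) -> path g x s ->
  (forall Q, is_path g Q -> size Q <= size (x :: s)) ->
  forall a w, d a w <= size s.
Proof.
move=> u p lg a w; case/connectP: (gconn a w) => q q0 ->.
case: (shortenP q0) => q' q1 u1 _.
apply: leq_trans (dist_walk q1) _.
by have := lg (a :: q'); rewrite /is_path u1 q1 /= ltnS; apply.
Qed.

Lemma diam x s : uniq (x :: s) -> path g x s ->
  (forall Q, is_path g Q -> size Q <= size (x :: s)) ->
  forall r w, d r w <= maxn (d r x) (d r (last x s)).
Proof.
move=> u p lg r w.
have [j [js e1 e2]] := proj r u p.
have [i [iL f1 f2]] := proj w u p.
have fx := far_end u p lg w x; have fy := far_end u p lg w (last x s).
set m := nth x (x :: s) j in e1 e2; set c := nth x (x :: s) i in f1 f2.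
have t1 := dtri r m w; have t2 := dtri m c w.
have mc : d m c <= maxn (i - j) (j - i).
  case: (leqP j i) => ji.
    by apply: leq_trans (path_nth_dist p ji iL) _; rewrite leq_maxl.
  by rewrite dsym; apply: leq_trans (path_nth_dist p (ltnW ji) js) _; rewrite leq_maxr.
rewrite [d c w]dsym in t2.
move: e1 e2 f1 f2 fx fy t1 t2 mc js iL; lia.
Qed.

Variable k : nat.

Definition heavy a b := [exists w, (w \in side a b) && (w \notin nbhd g k.-1 [set a])].

Lemma heavyP a b : 0 < k -> reflect (exists2 w, w \in side a b & k <= d a w) (heavy a b).
Proof.
move=> k0; apply: (iffP existsP) => [[w /andP [ws wn]]|[w ws kw]].
  by exists w => //; move: wn; rewrite dnbhd -ltnNge prednK.
by exists w; rewrite ws dnbhd -ltnNge prednK.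
Qed.

Definition Hs q := [set o : T * T | [&& g o.1 o.2, heavy o.1 o.2 & q \in side o.1 o.2]].
Definition B r q := Hs q :\: Hs r.

Lemma cardUD (A C : {set T * T}) : #|A :|: C| = #|A| + #|C :\: A|.
Proof.
have := cardsID A C; rewrite cardsU setIC; lia.
Qed.

Lemma B_upper r z q : 0 < k -> (forall w, d r w <= d r z) -> #|B r q| <= (d r z).+1 - k.
Proof.
move=> k0 far.
have mem : forall o, o \in B r q -> [/\ g o.1 o.2, heavy o.1 o.2, q \in side o.1 o.2 &
    r \notin side o.1 o.2].
  move=> [a b]; rewrite !inE /= => /andP [/negP nr /and3P [gab hv qs]]; split=> //.
  by apply/negP => rs; apply: nr; rewrite gab hv rs.
have inj : {in enum (B r q) &, injective (fun o : T * T => d r o.1)}.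
  move=> [a b] [a' b']; rewrite !mem_enum => /mem /= [gab _ qs rs] /mem /= [gab' _ qs' rs'] /= e.
  have s1 := sep gab rs qs; have s2 := sep gab' rs' qs'.
  have an : a \notin side a' b'.
    apply/negP => aS; have := sep gab' rs' aS; move: e; lia.
  case bS: (b \in side a' b'); last first.
    have := sep gab' (negbT bS) qs'; move: s1 s2 e; lia.
  have gba : g b a by rewrite gsym.
  have [e1 e2] := side_cross bS an gba.
  by rewrite e1 e2.
rewrite cardE -(size_map (fun o : T * T => d r o.1)).
have -> : (d r z).+1 - k = size (iota 0 ((d r z).+1 - k)) by rewrite size_iota.
apply: uniq_leq_size; first by rewrite map_inj_in_uniq // enum_uniq.
move=> v /mapP [[a b]]; rewrite mem_enum => /mem /= [gab hv qs rs] ->.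
rewrite mem_iota add0n.
case/(heavyP _ _ k0): hv => w ws kw.
have := sep gab rs ws; have := sep gab (bridge gab) ws; rewrite dist_xx.
have := far w; lia.
Qed.

Lemma B_lower s r : 0 < k -> path g r s -> d r (last r s) = size s ->
  (size s).+1 - k <= #|B r (last r s)|.
Proof.
move=> k0; elim: s r => [|y s IH] r; first by move=> _ _; rewrite /=; lia.
rewrite /= => /andP [gry p] hd.
set z := last y s in hd *.
have dyz : d y z = size s.
  apply/eqP; rewrite eqn_leq dist_walk //=.
  have := dtri r y z; have := dist1 gry; move: hd; lia.
have IH' := IH y p dyz.
have sub : B y z \subset B r z.
  apply/subsetP => [[a b]]; rewrite !inE /= => /andP [nhy /and3P [gab hv zs]].
  rewrite gab hv zs /= andbT; apply/negP => rs.
  have ys : y \notin side a b by rewrite inE; apply: contra nhy => ys; rewrite gab hv ys.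
  have {}zs : z \in side a b by rewrite inE.
  have {}rs : r \in side a b by rewrite inE.
  have [ra ya] := side_cross rs ys gry.
  have := sep gab ys zs; rewrite -ya dist_xx -ra; move: hd dyz; lia.
case: (leqP k (size s).+1) => kle; last first.
  apply: leq_trans (subset_leq_card sub); apply: leq_trans IH'; lia.
have ry : (r, y) \in B r z :\: B y z.
  have zs : z \in side r y.
    apply/negP => /negP zn; have := sep gry zn (side_b r y); rewrite dist_xx dsym [d z r]dsym.
    move: hd dyz; lia.
  have zs' : connect (del_edge g [set r; y]) y z by move: zs; rewrite inE.
  have br : connect (del_edge g [set r; y]) y r = false.
    by apply/negbTE; move: (bridge gry); rewrite inE.
  rewrite !inE /= gry zs' connect0 br /= andbT.
  have hv : heavy r y by apply/(heavyP _ _ k0); exists z => //; rewrite hd.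
  by rewrite hv.
have : #|B y z| < #|B r z|.
  apply: proper_card; rewrite properE sub /=; apply/subsetPn.
  by exists (r, y); move: ry; rewrite !inE => /andP [] //.
move: IH'; rewrite -/z /=; lia.
Qed.

Lemma step r q z : 0 < k -> (forall w, d r w <= d r z) ->
  #|Hs r :|: Hs q| <= #|Hs r :|: Hs z|.
Proof.
move=> k0 far; rewrite !cardUD leq_add2l.
apply: leq_trans (B_upper q k0 far) _.
case: (dist_geo (gconn r z)) => s [p l sz].
by have := B_lower k0 p; rewrite l sz; apply.
Qed.

Lemma U_le x s q1 q2 : 0 < k -> uniq (x :: s) -> path g x s ->
  (forall Q, is_path g Q -> size Q <= size (x :: s)) ->
  #|Hs q1 :|: Hs q2| <= #|Hs x :|: Hs (last x s)|.
Proof.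
move=> k0 u p lg.
have dm := diam u p lg q1.
have fe := far_end u p lg.
have dxy := upath_dist u p.
case: (leqP (d q1 x) (d q1 (last x s))) => c.
  have far1 : forall w, d q1 w <= d q1 (last x s).
    by move=> w; apply: leq_trans (dm w) _; rewrite geq_max c leqnn.
  apply: leq_trans (step q2 k0 far1) _; rewrite setUC.
  apply: leq_trans (step q1 (z := x) k0 _) _; last by rewrite setUC.
  by move=> w; rewrite [d _ x]dsym dxy; apply: fe.
have far1 : forall w, d q1 w <= d q1 x.
  by move=> w; apply: leq_trans (dm w) _; rewrite geq_max leqnn ltnW.
apply: leq_trans (step q2 k0 far1) _; rewrite setUC.
apply: leq_trans (step q1 (z := last x s) k0 _) _; first by move=> w; rewrite dxy; apply: fe.
by [].
Qed.

Lemma cross_conn (h : rel T) a b x w : subrel h g -> connect h x w ->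
  x \notin side a b -> w \in side a b -> connect h x a.
Proof.
move=> sub /connectP [t pt ->]; elim: t x pt => [|y t IH] x /=.
  by move=> _ xn xs; rewrite xs in xn.
case/andP => hxy pt xn ls; case yS: (y \in side a b).
  have gyx : g y x by rewrite gsym; apply: sub.
  by have [_ ->] := side_cross yS xn gyx; rewrite connect0.
by apply: connect_trans (connect1 hxy) (IH y pt (negbT yS) ls).
Qed.

Lemma side_inter a b b' w : g a b -> g a b' -> w \in side a b -> w \in side a b' -> b = b'.
Proof.
move=> gab gab' ws ws'; apply/eqP/negP => /negP nb.
have bn : b \notin side a b'.
  apply/negP => bs; have gba : g b a by rewrite gsym.
  have ne : [set b; a] != [set a; b'].
    apply/negP => /eqP e; have : b \in [set a; b'] by rewrite -e set21.
    case/set2P => eb; [by rewrite eb girr in gab | by rewrite eb eqxx in nb].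
  by move: (bridge gab'); rewrite (side_closed bs gba ne).
have sub : subrel (del_edge g [set a; b]) g by move=> u v /andP [].
move: ws; rewrite inE => c.
have := cross_conn sub c bn ws'; move: (bridge gab); rewrite inE => /negP; by [].
Qed.

Lemma induced_closed (S : {set T}) x y : connect (induced g S) x y -> x \in S -> y \in S.
Proof.
case/connectP => t pt ->; elim: t x pt => [|z t IH] x //= /andP [/and3P [_ _ zs] pt] _.
exact: IH.
Qed.

Lemma path_ind_sub (S : {set T}) x t : path (induced g S) x t -> x \in S ->
  {subset x :: t <= S}.
Proof.
elim: t x => [|z t IH] x /=; first by move=> _ xs v; rewrite inE => /eqP ->.
case/andP => /and3P [_ _ zs] p xs v; rewrite inE => /orP [/eqP -> //|].
exact: IH.
Qed.

Lemma conn_dist (S : {set T}) a w :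
  (forall x y, x \in S -> y \in S -> connect (induced g S) x y) ->
  a \in S -> w \in S -> d a w < #|S|.
Proof.
move=> cS aS wS; case/connectP: (cS a w aS wS) => t pt ->.
case: (shortenP pt) => t' pt' u' _.
have sub : subrel (induced g S) g by move=> u v /and3P [].
have allS : {subset a :: t' <= enum S}.
  by move=> v vin; rewrite mem_enum; exact: (path_ind_sub pt' aS vin).
have := uniq_leq_size u' allS; rewrite -cardE /= => sz.
apply: leq_ltn_trans sz; apply: dist_walk; exact: sub_path pt'.
Qed.

Lemma conf_in (S : {set T}) a b w :
  (forall x y, x \in S -> y \in S -> connect (induced g S) x y) -> #|S| = k ->
  g a b -> w \in S -> w \in side a b -> k <= d a w -> S \subset side a b.
Proof.
move=> cS Sk gab wS ws kw; apply/subsetP => x xS; case: (boolP (x \in side a b)) => // xn; exfalso.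
have c : connect (induced g S) x w by apply: cS.
have sub : subrel (induced g S) g by move=> u v /and3P [].
have aS := induced_closed (cross_conn sub c xn ws) xS.
by have := conn_dist cS aS wS; rewrite Sk ltnNge kw.
Qed.

Lemma disc1 (P : pred nat) tau : P 0 = false -> P tau -> exists2 r, r < tau & ~~ P r && P r.+1.
Proof.
elim: tau => [|t IH] P0 Pt; first by rewrite P0 in Pt.
case Pt': (P t); last by exists t => //; rewrite Pt' Pt.
by case: (IH P0 Pt') => r rt pr; exists r => //; apply: leqW.
Qed.

Lemma disc2 (P : pred nat) tau l : P tau -> P l = false -> tau <= l ->
  exists t, [/\ tau <= t, t < l, P t & ~~ P t.+1].
Proof.
elim: l => [|l IH] Pt Pl tl; first by move: tl; rewrite leqn0 => /eqP e; rewrite -e Pt in Pl.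
case Pl': (P l); first by exists l; rewrite Pl Pl' ltnSn; split=> //; move: tl;
  rewrite leq_eqVlt => /orP [/eqP e|//]; rewrite -e Pt in Pl.
case: (leqP tau l) => tl'.
  by case: (IH Pt Pl' tl') => t [a1 a2 a3 a4]; exists t; split=> //; apply: leqW.
have e : tau = l.+1 by apply/eqP; rewrite eqn_leq tl.
by rewrite e Pl in Pt.
Qed.

Section Walk.
Variable F : nat -> {ffun 'I_k -> T}.
Variable l : nat.
Local Notation C t := (conf_set (F t)).
Hypothesis k0 : 0 < k.
Hypothesis wconf : forall t, t <= l -> is_conf g (F t).
Hypothesis wadj : forall t, t < l -> conf_adj g (F t) (F t.+1).
Hypothesis wone : forall t, t < l -> #|C t.+1 :\: C t| = 1.
Hypothesis wspan : forall x, exists2 t, t <= l & x \in C t.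

Lemma Ck t : t <= l -> #|C t| = k.
Proof.
move=> tl; case/andP: (wconf tl) => /injectiveP inj _.
by rewrite /conf_set card_imset // card_ord.
Qed.

Lemma Cconn t : t <= l -> forall x y, x \in C t -> y \in C t -> connect (induced g (C t)) x y.
Proof.
move=> tl x y xs ys; case/andP: (wconf tl) => _ /forallP /(_ x) /implyP /(_ xs).
by move/forallP /(_ y) /implyP /(_ ys).
Qed.

Lemma agent t x : t < l -> x \in C t.+1 -> exists2 y, y \in C t & (y == x) || g y x.
Proof.
move=> tl /imsetP [i _ ->]; exists (F t i); first by apply/imsetP; exists i.
by move/forallP: (wadj tl) => /(_ i).
Qed.

Lemma agent' t x : t < l -> x \in C t -> exists2 y, y \in C t.+1 & (x == y) || g x y.
Proof.
move=> tl /imsetP [i _ ->]; exists (F t.+1 i); first by apply/imsetP; exists i.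
by move/forallP: (wadj tl) => /(_ i).
Qed.

Definition good (o : T * T) (t : nat) : bool :=
  [&& C t \subset side o.1 o.2, o.1 \in C t.+1 & revis (fun i => C i) t].

Lemma good_inj o o' t : t < l -> g o.1 o.2 -> g o'.1 o'.2 -> good o t -> good o' t -> o = o'.
Proof.
case: o o' => [a b] [a' b'] tl gab gab'; rewrite /good => /and3P [s1 i1 _] /and3P [s2 i2 _].
have n1 : a \in C t.+1 :\: C t.
  rewrite in_setD i1 andbT; apply/negP => ac; move: (bridge gab).
  by rewrite (subsetP s1 _ ac).
have n2 : a' \in C t.+1 :\: C t.
  rewrite in_setD i2 andbT; apply/negP => ac; move: (bridge gab').
  by rewrite (subsetP s2 _ ac).
have := wone tl; move/eqP/cards1P => [z ez]; move: n1 n2; rewrite ez !in_set1 => /eqP e1 /eqP e2.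
subst a a'; rewrite /= in gab gab' s1 s2.
have : 0 < #|C t| by rewrite (Ck (ltnW tl)).
case/card_gt0P => w wc.
by rewrite (side_inter gab gab' (subsetP s1 _ wc) (subsetP s2 _ wc)).
Qed.

Lemma good_ex a b q1 q2 : g a b -> heavy a b -> q1 \in C 0 -> q2 \in C l ->
  q1 \notin side a b -> q2 \notin side a b -> exists2 t, t < l & good (a, b) t.
Proof.
move=> gab /(heavyP _ _ k0) [w ws kw] q1C q2C q1s q2s.
case: (wspan w) => tau tl wC.
have in_tau : C tau \subset side a b.
  exact: conf_in (Cconn tl) (Ck tl) gab wC ws kw.
pose P t := C t \subset side a b.
have P0 : P 0 = false by apply/negP => /subsetP /(_ q1 q1C); rewrite (negbTE q1s).
have Pl : P l = false by apply/negP => /subsetP /(_ q2 q2C); rewrite (negbTE q2s).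
case: (disc1 P0 in_tau) => r rt /andP [nPr Pr1].
have rl : r < l by apply: leq_trans rt tl.
have aCr : a \in C r.
  case/subsetPn: nPr => x xC xn.
  case: (agent' rl xC) => y yC /orP [/eqP exy|gxy].
    by move: (subsetP Pr1 _ yC); rewrite -exy (negbTE xn).
  have gyx : g y x by rewrite gsym.
  by have [_ <-] := side_cross (subsetP Pr1 _ yC) xn gyx.
case: (disc2 in_tau Pl tl) => t [tt tl2 Pt nPt1].
exists t => //.
have aCt : a \in C t.+1.
  case/subsetPn: nPt1 => x xC xn.
  case: (agent tl2 xC) => y yC /orP [/eqP exy|gyx].
    by move: (subsetP Pt _ yC); rewrite exy (negbTE xn).
  by have [_ <-] := side_cross (subsetP Pt _ yC) xn gyx.
rewrite /good; apply/and3P; split => //; rewrite /revis.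
apply/subsetP => v vC.
case vt: (v \in C t); first by apply: (subsetP (CV _ (leqnn t))).
have : #|C t.+1 :\: C t| == 1 by rewrite wone.
case/cards1P => z ez.
have : v \in C t.+1 :\: C t by rewrite in_setD vt vC.
have : a \in C t.+1 :\: C t.
  rewrite in_setD aCt andbT; apply/negP => ac; move: (bridge gab); by rewrite (subsetP Pt _ ac).
rewrite ez !in_set1 => /eqP ea /eqP ev; rewrite ev -ea.
have rt' : r <= t by apply: leq_trans (ltnW rt) tt.
exact: (subsetP (CV _ rt') _ aCr).
Qed.

End Walk.

Definition Xset q1 q2 := [set o : T * T |
  [&& g o.1 o.2, heavy o.1 o.2, q1 \notin side o.1 o.2 & q2 \notin side o.1 o.2]].
Definition Hv := [set o : T * T | g o.1 o.2 && heavy o.1 o.2].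

Lemma Xset_card q1 q2 : #|Xset q1 q2| = #|Hv| - #|Hs q1 :|: Hs q2|.
Proof.
have -> : Xset q1 q2 = Hv :\: (Hs q1 :|: Hs q2).
  apply/setP => o; rewrite !inE.
  case: (g o.1 o.2); case: (heavy o.1 o.2) => //=; by rewrite negb_or ?andbT.
rewrite cardsDS //; apply/subsetP => o; rewrite !inE.
by case/orP => /and3P [-> -> _].
Qed.

Lemma Xset_le x s q1 q2 : 0 < k -> uniq (x :: s) -> path g x s ->
  (forall Q, is_path g Q -> size Q <= size (x :: s)) ->
  #|Xset x (last x s)| <= #|Xset q1 q2|.
Proof.
move=> k0 u p lg; rewrite !Xset_card; apply: leq_sub2l; exact: U_le.
Qed.

Lemma path_del_eop x s A : path g x s -> ~~ edge_on_path (x :: s) A ->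
  path (del_edge g A) x s.
Proof.
rewrite /edge_on_path /=; elim: s x => [|y s IH] x //= /andP [gxy p].
rewrite negb_or => /andP [ne nh]; rewrite delE gxy IH // andbT.
by rewrite eq_sym.
Qed.

Lemma P_out x s u v n : uniq (x :: s) -> path g x s -> g u v ->
  ~~ edge_on_path (x :: s) [set u; v] ->
  u \in nbhd g n [set z in x :: s] -> v \notin nbhd g n [set z in x :: s] ->
  forall p, p \in x :: s -> p \notin side u v.
Proof.
move=> _ ps guv ne un vn p pin; apply/negP => psd.
have pd := path_del_eop ps ne.
have allside : forall q, q \in x :: s -> q \in side u v.
  move=> q qin; rewrite inE.
  have cxq := path_connect pd qin; have cxp := path_connect pd pin.
  move: psd; rewrite inE => cvp.
  apply: connect_trans cvp _; apply: connect_trans _ cxq.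
  by rewrite (sym_connect_sym (del_sym _)).
case/nbhdP: un => p0 [p0in [t [pt lt st]]].
rewrite inE in p0in.
have p0s := allside _ p0in.
have p0n := sides_disj guv p0s.
have gvu : g v u by rewrite gsym.
have := cross_walk gvu p0n pt; rewrite lt (side_b v u) => /(_ isT); rewrite dist_xx addn0.
move=> le.
case: (dist_geo (gconn p0 v)) => t' [pt' lt' st'].
have p0S : p0 \in [set z in x :: s] by rewrite inE.
have sz : size t' <= n by rewrite st'; apply: leq_trans (leq_trans (leq_addr 1 _) le) st.
by have := nbhdW p0S pt' sz; rewrite lt' (negbTE vn).
Qed.

End Tree.

Section DK.
Variable T : finType.
Variable g : rel T.
Hypothesis gsym : symmetric g.
Hypothesis girr : irreflexive g.
Hypothesis gconn : forall x y, connect g x y.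
Hypothesis gE : #|edges g| = #|T| - 1.
Variable k : nat.

Lemma dk_le x s : 0 < k -> uniq (x :: s) -> path g x s ->
  \sum_(A in edges g) dk g k (x :: s) A <= #|Xset g k x (last x s)|.
Proof.
move=> k0 u p.
pose f (o : T * T) := [set o.1; o.2].
have H : forall A, A \in edges g -> dk g k (x :: s) A <= (A \in f @: Xset g k x (last x s)).
  move=> A _; rewrite /dk; case: existsP => [[a /existsP [b]]|] //.
  case/and5P => /eqP eA gab ne /existsP [n /andP [an bn]] hv.
  have ne' : ~~ edge_on_path (x :: s) [set a; b] by rewrite -eA.
  have po := P_out gsym girr gconn gE u p gab ne' an bn.
  have heavyab : heavy g k a b.
    case/existsP: hv => w /andP [cw wn]; apply/existsP; exists w.
    by rewrite inE -eA cw wn.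
  suff -> : A \in f @: Xset g k x (last x s) by [].
  apply/imsetP; exists (a, b); last by rewrite eA.
  rewrite inE /= gab heavyab po ?mem_head // po //.
  by rewrite mem_last.
apply: leq_trans (leq_sum _ H) _.
rewrite sum_bool_card; apply: leq_trans (leq_imset_card f _).
apply: subset_leq_card; apply/subsetP => A; rewrite inE => /andP [_ ->] //.
Qed.

End DK.

Theorem mainTheorem6 (T : finType) (g : rel T) (k : nat) (Pstar : seq T) :
  is_tree g -> 1 <= k -> k <= #|T| -> longest_path g Pstar ->
  forall (c0 : {ffun 'I_k -> T}) (cs : seq {ffun 'I_k -> T}),
    restricted_walk g c0 cs -> spanning c0 cs ->
    (#|T| - k) + \sum_(A in edges g) dk g k Pstar A <= size cs.
Proof.
move=> [[gsym girr] [gconn gE]] k1 kn [isp lg] c0 cs rw sp.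
case: Pstar isp lg => [//|x s] isp lg.
case/andP: isp => u p.
pose F t := nth c0 (c0 :: cs) t.
pose l := size cs.
case/andP: rw => allc pth.
have wconf : forall t, t <= l -> is_conf g (F t).
  by move=> t tl; apply: (all_nthP c0 allc); rewrite /= ltnS.
have wstep : forall t, t < l -> rstep g (F t) (F t.+1).
  by move=> t tl; exact: (pathP c0 pth t tl).
have wadj : forall t, t < l -> conf_adj g (F t) (F t.+1).
  by move=> t tl; case/andP: (wstep t tl).
have wone : forall t, t < l -> #|conf_set (F t.+1) :\: conf_set (F t)| = 1.
  by move=> t tl; case/andP: (wstep t tl) => _ /eqP.
have wspan : forall z, exists2 t, t <= l & z \in conf_set (F t).
  move=> z; move/forallP: sp => /(_ z) /(has_nthP c0) [t tl zt].
  by exists t => //; rewrite -ltnS.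
pose i0 : 'I_k := Ordinal k1.
have q1C : F 0 i0 \in conf_set (F 0) by apply/imsetP; exists i0.
have q2C : F l i0 \in conf_set (F l) by apply/imsetP; exists i0.
have sA := dk_le gsym girr gconn gE k1 u p.
have sB := Xset_le gsym girr gconn gE (F 0 i0) (F l i0) k1 u p lg.
pose X := Xset g k (F 0 i0) (F l i0).
pose phi (o : T * T) := [pick i : 'I_l | good g F o i].
have phiP : forall o, o \in X -> exists2 i, phi o = Some i & good g F o i.
  move=> [a b]; rewrite inE /= => /and4P [gab hv n1 n2].
  have [t tl gt] := good_ex gsym girr gconn gE k1 wconf wadj wone wspan gab hv q1C q2C n1 n2.
  rewrite /phi; case: pickP => [i gi|none]; first by exists i.
  by have := none (Ordinal tl); rewrite /= gt.
have inj : {in X &, injective phi}.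
  move=> o o' oX o'X e.
  have [i ei gi] := phiP o oX; have [i' ei' gi'] := phiP o' o'X.
  move: e; rewrite ei ei' => [[ei2]]; subst i'.
  move: oX o'X; rewrite !inE => /and4P [g1 _ _ _] /and4P [g2 _ _ _].
  have := good_inj gsym girr gconn gE k1 wconf wone (ltn_ord i); apply => //.
pose Rset := [set i : 'I_l | revis (fun t => conf_set (F t)) i].
have sC : #|X| <= #|Rset|.
  rewrite -(card_in_imset inj) -(card_imset Rset (@Some_inj _)).
  apply: subset_leq_card; apply/subsetP => oi /imsetP [o oX ->].
  have [i -> gi] := phiP o oX.
  apply/imsetP; exists i => //; rewrite inE.
  by case/and3P: gi.
have sD := count_walk (C := fun t => conf_set (F t)) (l := l) (Ck wconf (leq0n l)) wone (leqnn l).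
have VT : #|T| <= #|V (fun t => conf_set (F t)) l|.
  apply: subset_leq_card; apply/subsetP => z _; apply/VP.
  by case: (wspan z) => t tl zt; exists t.
have RSe : RS (fun t => conf_set (F t)) l = #|Rset|.
  by rewrite RS_sum sum_bool_card.
rewrite RSe in sD.
have hS := leq_trans sA (leq_trans sB sC).
have h := leq_trans (leq_add VT hS) sD.
by rewrite -(leq_add2l k) addnA subnKC.
Qed.
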